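(* Let $(\lambda_k),(x_k),(y_k)$ be generated by the acceleration framework (context) up to $K$ for convex differentiable $g$ with minimizer $x^*$, and suppose $\delta\le\frac{\|x^*\|}{\mu A_K}$ with $\mu=\frac{4\sqrt2}{\sqrt{1-\sigma}}$. Then for all $k\in[K]$ and $\theta\in[0,1]$: $\|y_k-x^*\|\le\mu\|x^*\|$ and $\|(1-\theta)x_k+\theta y_k-x^*\|\le\mu\|x^*\|$.
   Context: Acceleration framework: let $g:\mathbb{R}^d\to\mathbb{R}$ be convex and differentiable, $\sigma\in(0,1)$, $\delta\ge0$, $K\ge1$. Sequences $(\lambda_k)_{k=1}^K\subset(0,\infty)$ and $(x_k)_{k=0}^K,(y_k)_{k=0}^K\subset\mathbb{R}^d$ are generated by the framework if $x_0=y_0=0$, $A_0=0$, and for each $k=0,\dots,K-1$, with $a_{k+1}=\frac12\big[\lambda_{k+1}+\sqrt{\lambda_{k+1}^2+4\lambda_{k+1}A_k}\big]$, $A_{k+1}=A_k+a_{k+1}$, $\tilde x_k=\frac{A_k}{A_{k+1}}y_k+\frac{a_{k+1}}{A_{k+1}}x_k$, one has $\|\lambda_{k+1}\nabla g(y_{k+1})+y_{k+1}-\tilde x_k\|\le\sigma\|y_{k+1}-\tilde x_k\|+\lambda_{k+1}\delta$ and $\|x_{k+1}-(x_k-a_{k+1}\nabla g(y_{k+1}))\|\le a_{k+1}\delta$. (Note $\lambda_{k+1}A_{k+1}=a_{k+1}^2$.) *)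

(* Defs.v *)
From Stdlib Require Import Reals.
From mathcomp Require Import ssreflect ssrfun ssrbool eqtype ssrnat fintype bigop.

Open Scope R_scope.

Definition vec (d : nat) := 'I_d -> R.

Definition vadd {d} (u v : vec d) : vec d := fun i => u i + v i.
Definition vsub {d} (u v : vec d) : vec d := fun i => u i - v i.
Definition vscale {d} (c : R) (u : vec d) : vec d := fun i => c * u i.

Definition inner {d} (u v : vec d) : R := \big[Rplus/0]_(i < d) (u i * v i).
Definition norm {d} (u : vec d) : R := sqrt (inner u u).

Definition convex_fun {d} (g : vec d -> R) : Prop :=
  forall (x y : vec d) (t : R), 0 <= t <= 1 ->
    g (vadd (vscale (1 - t) x) (vscale t y)) <= (1 - t) * g x + t * g y.

Definition has_gradient {d} (g : vec d -> R) (x v : vec d) : Prop :=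
  forall eps : R, 0 < eps -> exists del : R, 0 < del /\
    forall h : vec d, norm h < del ->
      Rabs (g (vadd x h) - g x - inner v h) <= eps * norm h.

Definition is_minimizer {d} (g : vec d -> R) (xs : vec d) : Prop :=
  forall x : vec d, g xs <= g x.

Definition next_a (lam Ak : R) : R := (lam + sqrt (lam ^ 2 + 4 * lam * Ak)) / 2.

(* A_k for the stepsizes lam : nat -> R (lam (k+1) = lambda_{k+1}) *)
Fixpoint Aseq (lam : nat -> R) (k : nat) : R :=
  match k with
  | O => 0
  | S k' => Aseq lam k' + next_a (lam (S k')) (Aseq lam k')
  end.

Definition aseq (lam : nat -> R) (k : nat) : R :=
  match k with
  | O => 0
  | S k' => next_a (lam (S k')) (Aseq lam k')
  end.

Definition xtilde {d} (lam : nat -> R) (x y : nat -> vec d) (k : nat) : vec d :=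
  vadd (vscale (Aseq lam k / Aseq lam (S k)) (y k))
       (vscale (aseq lam (S k) / Aseq lam (S k)) (x k)).

Definition generated_by_framework {d} (grad : vec d -> vec d)
    (sigma delta : R) (K : nat) (lam : nat -> R) (x y : nat -> vec d) : Prop :=
  (forall k, (1 <= k <= K)%nat -> 0 < lam k) /\
  x O = (fun _ => 0) /\ y O = (fun _ => 0) /\
  forall k, (k < K)%nat ->
    norm (vsub (vadd (vscale (lam (S k)) (grad (y (S k)))) (y (S k))) (xtilde lam x y k))
      <= sigma * norm (vsub (y (S k)) (xtilde lam x y k)) + lam (S k) * delta /\
    norm (vsub (x (S k)) (vsub (x k) (vscale (aseq lam (S k)) (grad (y (S k))))))
      <= aseq lam (S k) * delta.

(* Main.v *)
Require Import Defs.
From Stdlib Require Import Reals.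
From mathcomp Require Import ssreflect ssrfun ssrbool eqtype ssrnat fintype bigop.
From Stdlib Require Import Lra Psatz FunctionalExtensionality.
Open Scope R_scope.

Section V.
Context {d : nat}.
Implicit Types u v w : vec d.

Definition sumR (f : 'I_d -> R) : R := \big[Rplus/0]_(i < d) f i.

Lemma sumR_plus (f h : 'I_d -> R) : sumR (fun i => f i + h i) = sumR f + sumR h.
Proof.
rewrite /sumR. apply: (big_rec3 (fun a b c => a = b + c)); first lra.
move=> i a b c _ ->. lra.
Qed.

Lemma sumR_scal c (f : 'I_d -> R) : sumR (fun i => c * f i) = c * sumR f.
Proof.
rewrite /sumR. apply: (big_rec2 (fun a b => a = c * b)); first lra.
move=> i a b _ ->. lra.
Qed.

Lemma sumR_ext (f h : 'I_d -> R) : (forall i, f i = h i) -> sumR f = sumR h.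
Proof. move=> H; rewrite /sumR; apply: eq_bigr => i _; exact: H. Qed.

Lemma sumR_nonneg (f : 'I_d -> R) : (forall i, 0 <= f i) -> 0 <= sumR f.
Proof.
move=> H; rewrite /sumR. apply: (big_ind (fun a => 0 <= a)).
- lra.
- move=> a b ? ?; lra.
- move=> i _; exact: H.
Qed.

Definition sq u := inner u u.

Lemma sq_nonneg u : 0 <= sq u.
Proof. apply: sumR_nonneg => i; nra. Qed.

Lemma norm_nonneg u : 0 <= norm u.
Proof. exact: sqrt_pos. Qed.

Lemma norm_sq u : norm u * norm u = sq u.
Proof. rewrite /norm sqrt_sqrt //; exact: sq_nonneg. Qed.

Lemma inner_sym u v : inner u v = inner v u.
Proof. apply: sumR_ext => i; ring. Qed.

Lemma sq_add u v : sq (vadd u v) = sq u + 2 * inner u v + sq v.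
Proof.
rewrite /sq /inner -/(sumR _) -!/(sumR _) -sumR_scal -!sumR_plus.
apply: sumR_ext => i; rewrite /vadd; ring.
Qed.

Lemma CS u v : inner u v * inner u v <= sq u * sq v.
Proof.
have Hq : forall t, 0 <= sq u + 2 * t * inner u v + t * t * sq v.
  move=> t. have := sq_nonneg (vadd u (vscale t v)).
  rewrite sq_add. have -> : inner u (vscale t v) = t * inner u v.
    by rewrite /inner -/(sumR _) -sumR_scal; apply: sumR_ext => i; rewrite /vscale; ring.
  have -> : sq (vscale t v) = t * t * sq v.
    by rewrite /sq /inner -/(sumR _) -sumR_scal; apply: sumR_ext => i; rewrite /vscale; ring.
  move=> H0. lra.
move: Hq (sq_nonneg u) (sq_nonneg v).
move: (sq u) (inner u v) (sq v) => p q r Hq Hp Hr.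
case: (Req_dec r 0) => Hr0.
  case: (Req_dec q 0) => Hq0; first (rewrite Hq0 Hr0; lra).
  have := Hq (-(p+1)/(2*q)). rewrite Hr0.
  have -> : p + 2 * (- (p + 1) / (2 * q)) * q + - (p + 1) / (2 * q) * (- (p + 1) / (2 * q)) * 0 = -1 by field.
  lra.
have Hr' : 0 < r by lra.
have := Hq (-q/r).
have -> : p + 2 * (- q / r) * q + - q / r * (- q / r) * r = (p * r - q * q) / r by field.
move=> H. have : 0 <= (p * r - q * q) / r * r by nra.
have -> : (p * r - q * q) / r * r = p * r - q * q by field. lra.
Qed.

Lemma inner_le u v : inner u v <= norm u * norm v.
Proof.
have := CS u v. rewrite -!norm_sq => H.
have h1 := norm_nonneg u. have h2 := norm_nonneg v.
have hm : 0 <= norm u * norm v by nra.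
have E : norm u * norm u * (norm v * norm v) = (norm u * norm v) * (norm u * norm v) by ring.
rewrite E in H. clear E.
move: H hm. move: (inner u v) (norm u * norm v) => q m H hm.
destruct (Rle_lt_dec q m) as [|Hlt]; first done.
have : m * m < q * q by nra. lra.
Qed.

Lemma norm_triangle u v : norm (vadd u v) <= norm u + norm v.
Proof.
have h1 := norm_nonneg u. have h2 := norm_nonneg v. have h3 := norm_nonneg (vadd u v).
have := norm_sq (vadd u v). rewrite sq_add -!norm_sq. have := inner_le u v. nra.
Qed.

Lemma norm_scale c u : 0 <= c -> norm (vscale c u) = c * norm u.
Proof.
move=> Hc. rewrite /norm.
have -> : inner (vscale c u) (vscale c u) = (c * c) * inner u u.
  by rewrite /inner -/(sumR _) -sumR_scal; apply: sumR_ext => i; rewrite /vscale; ring.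
rewrite sqrt_mult; [|nra| exact: sq_nonneg]. by rewrite sqrt_square.
Qed.

Lemma norm_le_sq u b : 0 <= b -> sq u <= b * b -> norm u <= b.
Proof. move=> Hb H. have := norm_sq u. have := norm_nonneg u. nra. Qed.

End V.

Lemma grad_ineq d (g : vec d -> R) (grad : vec d -> vec d) :
  convex_fun g -> (forall z, has_gradient g z (grad z)) ->
  forall y z, g y + inner (grad y) (vsub z y) <= g z.
Proof.
move=> Hc Hg yy z.
set h := vsub z yy. set G := inner (grad yy) h.
destruct (Rle_lt_dec (g yy + G) (g z)) as [|Hlt]; first done.
exfalso.
have Hn := norm_nonneg h.
set eps := (g yy + G - g z) / (2 * (norm h + 1)).
have He : 0 < eps by apply: Rdiv_lt_0_compat; lra.
have [del [Hdel Hd]] := Hg yy eps He.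
set t := Rmin 1 (del / (2 * (norm h + 1))).
have Ht0 : 0 < t.
  apply: Rmin_pos; first lra. apply: Rdiv_lt_0_compat; lra.
have Ht1 : t <= 1 by apply: Rmin_l.
have Ht2 : t <= del / (2 * (norm h + 1)) by apply: Rmin_r.
have Htn : t * norm h < del.
  have : t * (2 * (norm h + 1)) <= del.
    have -> : del = del / (2 * (norm h + 1)) * (2 * (norm h + 1)) by field; lra.
    apply: Rmult_le_compat_r; lra.
  nra.
have Hnorm : norm (vscale t h) = t * norm h by apply: norm_scale; lra.
have := Hd (vscale t h). rewrite Hnorm => /(_ Htn) Hd'.
have Eq : vadd yy (vscale t h) = vadd (vscale (1 - t) yy) (vscale t z).
  apply: functional_extensionality => i. rewrite /vadd /vscale /h /vsub. ring.
have Hcv := Hc yy z t (conj (Rlt_le _ _ Ht0) Ht1).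
rewrite -Eq in Hcv.
have Hin : inner (grad yy) (vscale t h) = t * G.
  rewrite /G /inner -/(sumR _) -sumR_scal. apply: sumR_ext => i. rewrite /vscale. ring.
rewrite Hin in Hd'.
have H1 : t * G - eps * (t * norm h) <= t * (g z - g yy).
  have := Rle_abs (-(g (vadd yy (vscale t h)) - g yy - t * G)). rewrite Rabs_Ropp. nra.
have H2 : G - eps * norm h <= g z - g yy.
  have : t * (G - eps * norm h - (g z - g yy)) <= 0 by nra.
  move=> H3. destruct (Rle_lt_dec (G - eps * norm h - (g z - g yy)) 0); first lra.
  nra.
have H4 : eps * norm h < g yy + G - g z.
  have -> : eps * norm h = (g yy + G - g z) * (norm h / (2 * (norm h + 1))) by rewrite /eps; field; lra.
  have : norm h / (2 * (norm h + 1)) < 1.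
    apply: (Rmult_lt_reg_r (2 * (norm h + 1))); first lra.
    have -> : norm h / (2 * (norm h + 1)) * (2 * (norm h + 1)) = norm h by field; lra.
    lra.
  move=> H5. have : 0 < g yy + G - g z by lra. nra.
lra.
Qed.

Lemma sumR_minus d (f h : 'I_d -> R) : sumR f - sumR h = sumR (fun i => f i - h i).
Proof.
have -> : sumR (fun i => f i - h i) = sumR (fun i => f i + (-1) * h i) by apply: sumR_ext => i; ring.
rewrite sumR_plus sumR_scal; ring.
Qed.

Lemma step_identity d (yk xk yp v xs : vec d) (A a Ap lam : R) :
  Ap = A + a -> Ap <> 0 -> a <> 0 -> lam = a * a / Ap ->
  A * inner v (vsub yk yp) + a * inner v (vsub xs yp) + / 2 * sq (vsub xk xs)
   - / 2 * sq (vsub (vsub xk (vscale a v)) xs)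
  = Ap / (2 * lam) * (sq (vsub yp (vadd (vscale (A / Ap) yk) (vscale (a / Ap) xk)))
       - sq (vsub (vadd (vscale lam v) yp) (vadd (vscale (A / Ap) yk) (vscale (a / Ap) xk)))).
Proof.
move=> HAp H1 H2 Hl.
rewrite /sq /inner -!/(sumR _).
rewrite !sumR_minus -!sumR_scal -!sumR_plus !sumR_minus.
apply: sumR_ext => i. rewrite /vsub /vadd /vscale Hl HAp.
rewrite HAp in H1. field. lra.
Qed.

Lemma sq_le_mono a b : 0 <= a -> a <= b -> a * a <= b * b.
Proof. move=> H1 H2. apply: Rmult_le_compat; lra. Qed.

Lemma sq_le_inv a b : 0 <= b -> a * a <= b * b -> a <= b.
Proof.
move=> H1 H2. destruct (Rle_lt_dec a b) as [|Hc]; first done.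
have : b * b < a * a by apply: Rmult_le_0_lt_compat; lra. lra.
Qed.

Lemma div_nonneg a b : 0 <= a -> 0 < b -> 0 <= a / b.
Proof. move=> H1 H2. apply: Rmult_le_pos => //. apply: Rlt_le; apply: Rinv_0_lt_compat => //. Qed.

Lemma real_step (A a Ap lam sig del X w r2 AK gy gyp gs qx rho ny Q s R nxp nyp : R) :
 0 <= A -> 0 < a -> 0 < lam -> Ap = A + a -> a*a = lam*Ap ->
 0 < sig < 1 -> w*w*(1-sig) = 1 -> 1 <= w -> 0 <= del -> 0 <= X ->
 r2*r2 = 2 -> 0 < r2 ->
 Ap <= AK -> 4*r2*w*AK*del <= X ->
 gs <= gy -> gs <= gyp ->
 2*(A*(gy-gs)) + qx <= (X + (w+1)*A*del)*(X + (w+1)*A*del) ->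
 0 <= rho -> rho*rho = qx ->
 ny <= 4*r2*w*X ->
 0 <= Q -> 0 <= s -> 0 <= R -> 0 <= nxp ->
 Ap*(gyp - gs) + /2*(Q*Q) + Ap/(2*lam)*(s*s - R*R) <= A*(gy-gs) + /2*qx ->
 R <= sig*s + lam*del ->
 nxp <= Q + a*del ->
 nyp <= A/Ap*ny + a/Ap*rho + s ->
 2*(Ap*(gyp-gs)) + nxp*nxp <= (X + (w+1)*Ap*del)*(X + (w+1)*Ap*del) /\ nyp <= 4*r2*w*X.
Proof.
move=> HA Ha Hl HAp Haa Hsig Hw Hw1 Hd HX Hr2 Hr2p HApK HK Hgy Hgyp HP0 Hrho Hrhoq Hny
  HQ Hs HR Hnxp Hid HRs Hnx Hny'.
have HAp0 : 0 < Ap by lra.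
have Hw' : w * w = / (1 - sig).
  apply: (Rmult_eq_reg_r (1 - sig)); last lra. rewrite Hw Rinv_l //; lra.
set t := Ap / a.
have Ht0 : 0 < t by apply: Rdiv_lt_0_compat.
have Hlam : lam = a * a / Ap by rewrite Haa; field; lra.
have Htl : t * lam = a by rewrite /t Hlam; field; lra.
have Htt : Ap / (2 * lam) = t * t / 2 by rewrite /t Hlam; field; lra.
rewrite Htt in Hid.
set S := t * s. set R' := t * R. set e := a * del in Hnx *.
have He : 0 <= e by rewrite /e; nra.
have HS : 0 <= S by rewrite /S; nra.
have HR'0 : 0 <= R' by rewrite /R'; nra.
have HR' : R' <= sig * S + e.
  have : t * R <= t * (sig * s + lam * del) by apply: Rmult_le_compat_l; lra.
  have -> : t * (sig * s + lam * del) = sig * (t * s) + (t * lam) * del by ring.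
  rewrite Htl. done.
set B := X + (w + 1) * A * del in HP0 *.
have Hmain : 2 * (Ap * (gyp - gs)) + Q * Q + (S * S - R' * R') <= B * B.
  have -> : S * S - R' * R' = t * t * (s * s - R * R) by rewrite /S /R'; ring.
  lra.
have Hlow : - (w * w * (e * e)) <= S * S - (sig * S + e) * (sig * S + e).
  have H1 : 0 < 1 - sig * sig by nra.
  have H2 : 0 <= ((1 - sig * sig) * S - sig * e) * ((1 - sig * sig) * S - sig * e) + sig * (e * e).
    have : 0 <= sig * (e * e) by nra. have := Rle_0_sqr ((1 - sig * sig) * S - sig * e). rewrite /Rsqr. lra.
  have E : (1 - sig * sig) * (S * S - (sig * S + e) * (sig * S + e) + w * w * (e * e))
     = ((1 - sig * sig) * S - sig * e) * ((1 - sig * sig) * S - sig * e) + sig * (e * e).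
    rewrite Hw'. field. lra.
  have : 0 <= (1 - sig * sig) * (S * S - (sig * S + e) * (sig * S + e) + w * w * (e * e)) by lra.
  move=> H3. have : 0 <= S * S - (sig * S + e) * (sig * S + e) + w * w * (e * e).
    destruct (Rle_lt_dec 0 (S * S - (sig * S + e) * (sig * S + e) + w * w * (e * e))); first done.
    nra.
  lra.
have HRR : R' * R' <= (sig * S + e) * (sig * S + e) by nra.
have HP : 0 <= 2 * (Ap * (gyp - gs)) by nra.
have Hw0 : 0 <= w by lra.
have HB0 : 0 <= B.
  rewrite /B. have : 0 <= (w + 1) * A by nra. move=> ?. have : 0 <= (w + 1) * A * del by nra. lra.
have HPQ : 2 * (Ap * (gyp - gs)) + Q * Q <= (B + w * e) * (B + w * e).
  have : 0 <= B * (w * e) by apply: Rmult_le_pos; nra.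
  have : 2 * (Ap * (gyp - gs)) + Q * Q <= B * B + w * w * (e * e) by lra.
  nra.
have HQb : Q <= B + w * e.
  apply: sq_le_inv; last lra. have : 0 <= w * e by nra. lra.
split.
  have -> : X + (w + 1) * Ap * del = B + (w + 1) * e by rewrite /B /e HAp; ring.
  have : nxp * nxp <= (Q + e) * (Q + e) by apply: sq_le_mono; lra.
  have : (Q + e) * (Q + e) <= (B + w * e + e) * (B + w * e + e) by apply: sq_le_mono; lra.
  have : (B + w * e + e) * (B + w * e + e) = (B + w * e) * (B + w * e) + 2 * (B + w * e) * e + e * e by ring.
  have : Q * e <= (B + w * e) * e by apply: Rmult_le_compat_r; lra.
  have -> : B + (w + 1) * e = B + w * e + e by ring.
  nra.
have HAK : A <= AK by lra.
have HZ : 0 <= AK * del by apply: Rmult_le_pos; lra.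
have Hr21 : 1 <= r2 by nra.
have HKd : (w + 1) * AK * del <= X / 2.
  have E1 : 4 * r2 * w * AK * del = 4 * (r2 * w) * (AK * del) by ring.
  have E2 : (w + 1) * AK * del = (w + 1) * (AK * del) by ring.
  rewrite E2. rewrite E1 in HK.
  have : 2 * (w + 1) <= 4 * (r2 * w) by nra.
  move=> H. have : 2 * (w + 1) * (AK * del) <= 4 * (r2 * w) * (AK * del) by apply: Rmult_le_compat_r.
  lra.
have HBX : B <= 3 / 2 * X.
  have : (w + 1) * A * del <= (w + 1) * AK * del.
    have : 0 <= (w + 1) * del by nra. nra.
  rewrite /B; lra.
have HeK : e <= AK * del by rewrite /e; nra.
have Hsv : s = a / Ap * S by rewrite /S /t; field; lra.
clearbody B S R' e t.
have HSB : S * S - (sig * S + e) * (sig * S + e) <= B * B by nra.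
have HS3 : S <= 3 * w * X.
  have H1 : (1 - sig) * (S * S) <= B * B + 2 * S * e + e * e.
    have : (1 - sig) * (S * S) <= (1 - sig * sig) * (S * S) by nra.
    nra.
  have H2 : 2 * S * e <= (1 - sig) / 2 * (S * S) + 2 * (e * e) * (w * w).
    rewrite Hw'.
    have E : (1 - sig) / 2 * (S * S) + 2 * (e * e) * / (1 - sig) - 2 * S * e
       = ((1 - sig) * S - 2 * e) * ((1 - sig) * S - 2 * e) / (2 * (1 - sig)) by field; lra.
    have : 0 <= ((1 - sig) * S - 2 * e) * ((1 - sig) * S - 2 * e) / (2 * (1 - sig)).
      apply: div_nonneg; [apply: Rle_0_sqr | lra].
    lra.
  have H3 : (1 - sig) / 2 * (S * S) <= B * B + e * e + 2 * (e * e) * (w * w) by lra.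
  have H4 : S * S <= 2 * (w * w) * (B * B) + 2 * (w * w) * (e * e) + 4 * (e * e) * (w * w * (w * w)).
    have : w * w * ((1 - sig) / 2 * (S * S)) <= w * w * (B * B + e * e + 2 * (e * e) * (w * w)).
      apply: Rmult_le_compat_l; nra.
    have -> : w * w * ((1 - sig) / 2 * (S * S)) = (w * w * (1 - sig)) * (S * S) / 2 by field.
    rewrite Hw. lra.
  have He2 : 32 * (w * w) * (e * e) <= X * X.
    have : 4 * r2 * w * e <= X.
      have : 4 * r2 * w * e <= 4 * r2 * w * AK * del.
        have : 0 <= 4 * r2 * w by nra. nra.
      lra.
    move=> H5. have : 0 <= 4 * r2 * w * e by nra.
    move=> H6. have : (4 * r2 * w * e) * (4 * r2 * w * e) <= X * X by nra.
    have -> : (4 * r2 * w * e) * (4 * r2 * w * e) = 16 * (r2 * r2) * (w * w) * (e * e) by ring.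
    rewrite Hr2. lra.
  have HB2 : B * B <= 9 / 4 * (X * X) by nra.
  have Hww : 1 <= w * w by nra.
  have H5 : S * S <= 9 * (w * w) * (X * X).
    have ? : 2 * (w * w) * (e * e) <= (w * w) * (X * X) / 16 by nra.
    have ? : 4 * (e * e) * (w * w * (w * w)) <= (w * w) * (X * X) / 8 by nra.
    have ? : 2 * (w * w) * (B * B) <= 9 / 2 * (w * w) * (X * X) by nra.
    have ? : 0 <= w * w * (X * X) by nra. lra.
  have : 0 <= 3 * w * X by nra.
  move=> H6. destruct (Rle_lt_dec S (3 * w * X)) as [|Hc]; first done.
  have : (3 * w * X) * (3 * w * X) < S * S by nra. nra.
have Hrho_B : rho <= B.
  destruct (Rle_lt_dec rho B) as [|Hc]; first done.
  have : B * B < rho * rho by nra.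
  have : 0 <= 2 * (A * (gy - gs)) by nra. lra.
have Hr98 : 9 / 8 <= r2 by nra.
have Hfin : rho + S <= 4 * r2 * w * X.
  have : 3 / 2 * X <= 3 / 2 * w * X by nra.
  have : 4 * r2 * w * X >= 4 * (9 / 8) * w * X by nra.
  lra.
have Hc1 : 0 <= A / Ap by apply: div_nonneg; lra.
have Hc2 : 0 <= a / Ap by apply: div_nonneg; lra.
have Hsum : A / Ap + a / Ap = 1 by rewrite HAp; field; lra.
rewrite Hsv in Hny'.
have : A / Ap * ny <= A / Ap * (4 * r2 * w * X) by apply: Rmult_le_compat_l.
have : a / Ap * (rho + S) <= a / Ap * (4 * r2 * w * X) by apply: Rmult_le_compat_l.
nra.
Qed.

Lemma next_a_pos l A : 0 < l -> 0 <= A -> 0 < next_a l A.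
Proof.
move=> Hl HA. rewrite /next_a. have := sqrt_pos (l ^ 2 + 4 * l * A). lra.
Qed.

Lemma next_a_sq l A : 0 < l -> 0 <= A -> next_a l A * next_a l A = l * (A + next_a l A).
Proof.
move=> Hl HA. rewrite /next_a.
have H0 : 0 <= l ^ 2 + 4 * l * A by nra.
have := sqrt_sqrt _ H0. move: (sqrt (l ^ 2 + 4 * l * A)) => D HD.
field_simplify. rewrite /= in HD. nra.
Qed.

Lemma A_nonneg (lam : nat -> R) K : (forall k, (1 <= k <= K)%nat -> 0 < lam k) ->
  forall k, (k <= K)%nat -> 0 <= Aseq lam k.
Proof.
move=> Hl. elim=> [|k IH] Hk /=; first lra.
have HA : 0 <= Aseq lam k by apply: IH; apply: ltnW.
have := next_a_pos (lam k.+1) (Aseq lam k). move=> H.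
have : 0 < next_a (lam k.+1) (Aseq lam k) by apply: H => //; apply: Hl; rewrite Hk.
lra.
Qed.

Lemma A_mono (lam : nat -> R) K : (forall k, (1 <= k <= K)%nat -> 0 < lam k) ->
  forall k j, (k <= j)%nat -> (j <= K)%nat -> Aseq lam k <= Aseq lam j.
Proof.
move=> Hl k. elim=> [|j IH] Hkj HjK.
  have -> : k = 0%nat by move: Hkj; case: k. lra.
case: (leqP k j) => Hkj'.
  have := IH Hkj' (ltnW HjK). simpl.
  have HA : 0 <= Aseq lam j by apply: (A_nonneg lam K Hl); apply: ltnW.
  have : 0 < next_a (lam j.+1) (Aseq lam j) by apply: next_a_pos => //; apply: Hl; rewrite HjK.
  lra.
have -> : k = j.+1 by apply/eqP; rewrite eqn_leq Hkj Hkj'.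
lra.
Qed.

Lemma norm_eq_ext d (u v : vec d) : (forall i, u i = v i) -> norm u = norm v.
Proof. move=> H. by have -> : u = v by apply: functional_extensionality. Qed.

Theorem mainTheorem14 (d : nat) (g : vec d -> R) (grad : vec d -> vec d)
  (sigma delta : R) (K : nat) (lam : nat -> R) (x y : nat -> vec d) (xs : vec d) :
  convex_fun g ->
  (forall z : vec d, has_gradient g z (grad z)) ->
  0 < sigma < 1 -> 0 <= delta -> (1 <= K)%nat ->
  generated_by_framework grad sigma delta K lam x y ->
  is_minimizer g xs ->
  let mu := 4 * sqrt 2 / sqrt (1 - sigma) in
  delta <= norm xs / (mu * Aseq lam K) ->
  forall k : nat, (1 <= k <= K)%nat ->
  forall theta : R, 0 <= theta <= 1 ->
    norm (vsub (y k) xs) <= mu * norm xs /\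
    norm (vsub (vadd (vscale (1 - theta) (x k)) (vscale theta (y k))) xs) <= mu * norm xs.
Proof.
move=> Hc Hg Hsig Hd HK [Hl [Hx0 [Hy0 Hfr]]] Hmin mu HdK k Hk theta Hth.
have Hs1 : 0 < sqrt (1 - sigma) by apply: sqrt_lt_R0; lra.
have Hr2 : sqrt 2 * sqrt 2 = 2 by apply: sqrt_sqrt; lra.
have Hr2p : 0 < sqrt 2 by apply: sqrt_lt_R0; lra.
have Hs1sq : sqrt (1 - sigma) * sqrt (1 - sigma) = 1 - sigma by apply: sqrt_sqrt; lra.
have Hs1le : sqrt (1 - sigma) <= 1.
  apply: sq_le_inv; lra.
set w := / sqrt (1 - sigma).
have Hmu : mu = 4 * sqrt 2 * w by rewrite /mu /w.
have Hw : w * w * (1 - sigma) = 1.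
  rewrite /w. move: Hs1sq Hs1. move: (sqrt (1 - sigma)) => s0 E P. rewrite -E. field; lra.
have Hw1 : 1 <= w.
  rewrite /w. have : sqrt (1 - sigma) * / sqrt (1 - sigma) = 1 by field; lra.
  move=> E. nra.
clearbody w mu.
set r2 := sqrt 2 in Hr2 Hr2p Hmu. clearbody r2.
set X := norm xs in HdK *.
have HX : 0 <= X := norm_nonneg xs.
have HA0 := A_nonneg lam K Hl.
have HAm := A_mono lam K Hl.
have HAK : 0 < Aseq lam K.
  have H1 : Aseq lam 1 <= Aseq lam K by apply: HAm.
  have : 0 < Aseq lam 1.
    rewrite /=. have Hl1 : 0 < lam 1%nat by apply: Hl; rewrite HK.
    have : 0 < next_a (lam 1%nat) 0 by apply: next_a_pos => //; lra.
    lra.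
  lra.
have HKd : 4 * r2 * w * Aseq lam K * delta <= X.
  have Hm : 0 < mu * Aseq lam K by rewrite Hmu; apply: Rmult_lt_0_compat => //; nra.
  have : mu * Aseq lam K * delta <= mu * Aseq lam K * (X / (mu * Aseq lam K)).
    by apply: Rmult_le_compat_l; lra.
  have Hmu0 : 0 < mu by rewrite Hmu; nra.
  have -> : mu * Aseq lam K * (X / (mu * Aseq lam K)) = X by field; split; lra.
  rewrite Hmu => ?; lra.
have Inv : forall j, (j <= K)%nat ->
  2 * (Aseq lam j * (g (y j) - g xs)) + sq (vsub (x j) xs)
    <= (X + (w + 1) * Aseq lam j * delta) * (X + (w + 1) * Aseq lam j * delta)
  /\ norm (vsub (y j) xs) <= 4 * r2 * w * X.
  elim=> [|j IH] Hj.
    have E1 : sq (vsub (x 0%nat) xs) = X * X.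
      rewrite norm_sq Hx0 /sq /inner. apply: eq_bigr => i _. rewrite /vsub. ring.
    have E2 : norm (vsub (y 0%nat) xs) = X.
      rewrite /X /norm Hy0. f_equal. apply: eq_bigr => i _. rewrite /vsub. ring.
    rewrite E1 E2 /=. split; first lra.
    have : 1 <= 4 * r2 * w by nra. nra.
  have [IH1 IH2] := IH (ltnW Hj).
  have [Hr Hxu] := Hfr j Hj.
  have HA : 0 <= Aseq lam j by apply: HA0; apply: ltnW.
  have Hlj : 0 < lam j.+1 by apply: Hl; rewrite Hj.
  have Ha : 0 < aseq lam j.+1 by apply: next_a_pos.
  have HApe : Aseq lam j.+1 = Aseq lam j + aseq lam j.+1 by [].
  have Haa : aseq lam j.+1 * aseq lam j.+1 = lam j.+1 * Aseq lam j.+1.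
    rewrite HApe. exact: next_a_sq.
  have HApK : Aseq lam j.+1 <= Aseq lam K by apply: HAm.
  set A := Aseq lam j in HA HApe Haa IH1 *.
  set a := aseq lam j.+1 in Ha HApe Haa Hr Hxu *.
  set Ap := Aseq lam j.+1 in HApe Haa HApK Hr Hxu *.
  set l := lam j.+1 in Hlj Haa Hr Hxu *.
  set v := grad (y j.+1) in Hr Hxu *.
  have Hxt : xtilde lam x y j = vadd (vscale (A / Ap) (y j)) (vscale (a / Ap) (x j)) by [].
  rewrite Hxt in Hr.
  set xt := vadd (vscale (A / Ap) (y j)) (vscale (a / Ap) (x j)) in Hr *.
  have HAp0 : 0 < Ap by lra.
  have F1 := @grad_ineq d g grad Hc Hg (y j.+1) (y j).
  have F2 := @grad_ineq d g grad Hc Hg (y j.+1) xs.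
  have Hid := @step_identity d (y j) (x j) (y j.+1) v xs A a Ap l HApe
     (Rgt_not_eq _ _ HAp0) (Rgt_not_eq _ _ Ha) ltac:(rewrite Haa; field; lra).
  rewrite -/xt in Hid.
  set u := vsub (x j) (vscale a v) in Hxu Hid *.
  have Hidi : Ap * (g (y j.+1) - g xs) + / 2 * (norm (vsub u xs) * norm (vsub u xs))
      + Ap / (2 * l) * (norm (vsub (y j.+1) xt) * norm (vsub (y j.+1) xt)
          - norm (vsub (vadd (vscale l v) (y j.+1)) xt) * norm (vsub (vadd (vscale l v) (y j.+1)) xt))
      <= A * (g (y j) - g xs) + / 2 * sq (vsub (x j) xs).
    rewrite !norm_sq -Hid.
    have : A * (g (y j.+1) + inner v (vsub (y j) (y j.+1))) <= A * g (y j)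
      by apply: Rmult_le_compat_l.
    have : a * (g (y j.+1) + inner v (vsub xs (y j.+1))) <= a * g xs
      by apply: Rmult_le_compat_l; [lra | exact: F2].
    rewrite HApe. lra.
  have Hnx : norm (vsub (x j.+1) xs) <= norm (vsub u xs) + a * delta.
    have -> : vsub (x j.+1) xs = vadd (vsub u xs) (vsub (x j.+1) u).
      apply: functional_extensionality => i. rewrite /vadd /vsub. ring.
    have := norm_triangle (vsub u xs) (vsub (x j.+1) u). lra.
  have Hny : norm (vsub (y j.+1) xs) <= A / Ap * norm (vsub (y j) xs)
       + a / Ap * norm (vsub (x j) xs) + norm (vsub (y j.+1) xt).
    have -> : vsub (y j.+1) xs = vadd (vadd (vscale (A / Ap) (vsub (y j) xs))
        (vscale (a / Ap) (vsub (x j) xs))) (vsub (y j.+1) xt).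
      apply: functional_extensionality => i. rewrite /vadd /vsub /vscale /xt /vadd /vscale.
      rewrite HApe. field. rewrite HApe in HAp0. lra.
    have Hc1 : 0 <= A / Ap by apply: div_nonneg.
    have Hc2 : 0 <= a / Ap by apply: div_nonneg; lra.
    have T1 := norm_triangle (vadd (vscale (A / Ap) (vsub (y j) xs)) (vscale (a / Ap) (vsub (x j) xs)))
        (vsub (y j.+1) xt).
    have T2 := norm_triangle (vscale (A / Ap) (vsub (y j) xs)) (vscale (a / Ap) (vsub (x j) xs)).
    rewrite !norm_scale // in T2. lra.
  rewrite -[sq (vsub (x j.+1) xs)]norm_sq.
  apply: (@real_step A a Ap l sigma delta X w r2 (Aseq lam K) (g (y j)) (g (y j.+1)) (g xs)
     (sq (vsub (x j) xs)) (norm (vsub (x j) xs)) (norm (vsub (y j) xs))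
     (norm (vsub u xs)) (norm (vsub (y j.+1) xt))
     (norm (vsub (vadd (vscale l v) (y j.+1)) xt))
     (norm (vsub (x j.+1) xs)) (norm (vsub (y j.+1) xs))) => //;
     try apply: norm_nonneg; try lra; try apply: Hmin; try exact: norm_sq.
have Hk' : (k <= K)%nat by case/andP: Hk.
have [I1 I2] := Inv k Hk'.
rewrite Hmu. split => //.
have Hgk : g xs <= g (y k) by apply: Hmin.
have HAk : 0 <= Aseq lam k by apply: HA0.
have HAkK : Aseq lam k <= Aseq lam K by apply: HAm.
have Hr21 : 1 <= r2 by nra.
have HBX : X + (w + 1) * Aseq lam k * delta <= 4 * r2 * w * X.
  have HZ : 0 <= Aseq lam K * delta by apply: Rmult_le_pos; lra.
  have : (w + 1) * Aseq lam k * delta <= (w + 1) * (Aseq lam K * delta).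
    have -> : (w + 1) * Aseq lam k * delta = (w + 1) * (Aseq lam k * delta) by ring.
    apply: Rmult_le_compat_l; first lra. apply: Rmult_le_compat_r; lra.
  have E1 : 4 * r2 * w * Aseq lam K * delta = 4 * (r2 * w) * (Aseq lam K * delta) by ring.
  rewrite E1 in HKd.
  have : 2 * (w + 1) <= 4 * (r2 * w) by nra.
  move=> H. have : 2 * (w + 1) * (Aseq lam K * delta) <= 4 * (r2 * w) * (Aseq lam K * delta)
    by apply: Rmult_le_compat_r.
  have : 3 / 2 * X <= 4 * r2 * w * X.
    have : 3 / 2 <= 4 * r2 * w by nra. move=> ?. nra.
  lra.
have Hrho : norm (vsub (x k) xs) <= 4 * r2 * w * X.
  apply: sq_le_inv; first (apply: Rmult_le_pos; [nra | lra]).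
  rewrite norm_sq.
  have : 0 <= 2 * (Aseq lam k * (g (y k) - g xs)) by nra.
  have : (X + (w + 1) * Aseq lam k * delta) * (X + (w + 1) * Aseq lam k * delta)
     <= (4 * r2 * w * X) * (4 * r2 * w * X).
    apply: sq_le_mono => //. have : 0 <= (w + 1) * Aseq lam k * delta.
      apply: Rmult_le_pos; last lra. apply: Rmult_le_pos; lra.
    lra.
  lra.
have -> : vsub (vadd (vscale (1 - theta) (x k)) (vscale theta (y k))) xs
   = vadd (vscale (1 - theta) (vsub (x k) xs)) (vscale theta (vsub (y k) xs)).
  apply: functional_extensionality => i. rewrite /vadd /vsub /vscale. ring.
have T := norm_triangle (vscale (1 - theta) (vsub (x k) xs)) (vscale theta (vsub (y k) xs)).
rewrite !norm_scale in T; try lra.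
have : (1 - theta) * norm (vsub (x k) xs) <= (1 - theta) * (4 * r2 * w * X)
  by apply: Rmult_le_compat_l; lra.
have : theta * norm (vsub (y k) xs) <= theta * (4 * r2 * w * X)
  by apply: Rmult_le_compat_l; lra.
lra.
Qed.
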